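(* Let $G_u=(V,E_u)$ be a connected simple undirected graph on $n\ge2$ vertices and let $T_0$ be a spanning tree of $G_u$ with maximum degree $D_0$ and diameter $\Delta_0$. For each integer $K$ with $0\le K\le|E_u\setminus E(T_0)|$, let $H_K$ be the directed graph obtained as follows. (Step 2) Starting with $T:=T_0$, repeat $K$ times: choose an edge $\{u^\star,v^\star\}\in E_u\setminus E(T)$ maximizing the distance between $u^\star$ and $v^\star$ in the current graph $T$ (ties broken arbitrarily) and add it to $T$. (Step 3) Let $E_b$ be the set of bridges of the resulting graph $T$ and let the bridge-connected components be the connected components of $T$ after deleting all bridges. In each bridge-connected component $C$, perform a depth-first search from an arbitrary vertex, obtaining a DFS tree $T_C$ and preorder numbers $pre(\cdot)$; for each edge $\{u,v\}$ of $C$ with $pre(u)<pre(v)$, add the directed link $(u,v)$ to $H_K$ if $\{u,v\}\in T_C$, and the directed link $(v,u)$ otherwise. Finally, for each bridge $\{u,v\}\in E_b$ add both $(u,v)$ and $(v,u)$ to $H_K$. Then every $H_K$ is strongly connected, and $$\min_{K}\Phi(H_K)\le 2D_0\,\Delta_0^2\,(1+D_0)^{4\Delta_0}.$$ In particular this holds when $T_0$ is a minimum-degree spanning tree of $G_u$.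
   Context: For a strongly connected directed graph $H$ on $V$ without self-loops, let $D_H^+$ and $D_H^-$ denote its maximum out-degree and maximum in-degree, and $\Delta(H)$ its diameter (the maximum, over ordered pairs of vertices, of the length of a shortest directed path). The design objective is $\Phi(H):=(D_H^++D_H^-)\,\Delta(H)^2\,(1+D_H^+)^{4\Delta(H)}$. A bridge of an undirected graph is an edge whose removal increases the number of connected components. The preorder number $pre(v)$ is the position in $\{1,\dots,|C|\}$ at which $v$ is first visited by the depth-first search. A minimum-degree spanning tree is a spanning tree minimizing the maximum vertex degree. *)

(* Defs.v *)
From mathcomp Require Import all_boot.
Set Implicit Arguments. Unset Strict Implicit. Unset Printing Implicit Defensive.

Section Graphs.
Variable V : finType.

Definition simple_graph (E : {set {set V}}) : Prop :=
  forall e, e \in E -> #|e| = 2.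

Definition adj (E : {set {set V}}) : rel V :=
  fun x y => (x != y) && ([set x; y] \in E).

Definition ugraph_connected (E : {set {set V}}) : Prop :=
  forall x y : V, connect (adj E) x y.

Definition acyclic (E : {set {set V}}) : Prop :=
  forall c : seq V, uniq c -> 3 <= size c -> ~~ cycle (adj E) c.

Definition spanning_tree (Eu T : {set {set V}}) : Prop :=
  T \subset Eu /\ ugraph_connected T /\ acyclic T.

Definition comp (E : {set {set V}}) (x : V) : {set V} :=
  [set y | connect (adj E) x y].

Definition ncomp (E : {set {set V}}) : nat := #|[set comp E x | x : V]|.

Definition bridges (E : {set {set V}}) : {set {set V}} :=
  [set e in E | ncomp E < ncomp (E :\ e)].

Definition walk (r : rel V) (x y : V) (n : nat) : bool :=
  [exists p : n.-tuple V, path r x p && (last x p == y)].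

(* length of a shortest walk from x to y; (all distances in a connected
   graph are < #|V|; #|V| is returned if y is unreachable from x) *)
Definition dist (r : rel V) (x y : V) : nat :=
  \big[minn/#|V|]_(n < #|V| | walk r x y n) n.

Definition diam (r : rel V) : nat := \max_(x : V) \max_(y : V) dist r x y.

Definition max_outdeg (r : rel V) : nat := \max_(x : V) #|[set y | r x y]|.
Definition max_indeg (r : rel V) : nat := \max_(x : V) #|[set y | r y x]|.

Definition arcs (H : {set V * V}) : rel V := fun x y => (x, y) \in H.

Definition strongly_connected (H : {set V * V}) : Prop :=
  forall x y : V, connect (arcs H) x y.

Definition Phi (H : {set V * V}) : nat :=
  (max_outdeg (arcs H) + max_indeg (arcs H)) * (diam (arcs H)) ^ 2
  * (1 + max_outdeg (arcs H)) ^ (4 * diam (arcs H)).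

Definition greedy_step (Eu T T' : {set {set V}}) : Prop :=
  exists u v : V,
    [/\ [set u; v] \in Eu :\: T,
        T' = [set u; v] |: T &
        forall u' v' : V, [set u'; v'] \in Eu :\: T ->
          dist (adj T) u' v' <= dist (adj T) u v].

Inductive greedy_iter (Eu : {set {set V}}) :
  nat -> {set {set V}} -> {set {set V}} -> Prop :=
| greedy_iter0 T : greedy_iter Eu 0 T T
| greedy_iterS n T T' T'' :
    greedy_step Eu T T' -> greedy_iter Eu n T' T'' -> greedy_iter Eu n.+1 T T''.

(* Nondeterministic recursive depth-first search on r.
   dfs_from r stack visited tree visited_final tree_final :
   the stack is the current recursion path (top first), 'visited' lists the
   vertices in order of first visit (preorder), 'tree' holds the DFS-tree edges. *)
Inductive dfs_from (r : rel V) :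
  seq V -> seq V -> {set {set V}} -> seq V -> {set {set V}} -> Prop :=
| dfs_done vis tr : dfs_from r [::] vis tr vis tr
| dfs_push v w st vis tr vis' tr' :
    r v w -> w \notin vis ->
    dfs_from r (w :: v :: st) (rcons vis w) ([set v; w] |: tr) vis' tr' ->
    dfs_from r (v :: st) vis tr vis' tr'
| dfs_pop v st vis tr vis' tr' :
    (forall w, r v w -> w \in vis) ->
    dfs_from r st vis tr vis' tr' ->
    dfs_from r (v :: st) vis tr vis' tr'.

Definition dfs (r : rel V) (x : V) (ord : seq V) (tr : {set {set V}}) : Prop :=
  dfs_from r [:: x] [:: x] set0 ord tr.

Definition pre (ord : seq V) (v : V) : nat := (index v ord).+1.

(* H is a possible result of Step 3 applied to the undirected graph T:
   d assigns to each bridge-connected component C a root, a preorder list and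
   a DFS tree, which must come from a DFS of C (= of T minus bridges) started
   at a vertex of C. *)
Definition step3 (T : {set {set V}}) (H : {set V * V}) : Prop :=
  let F := T :\: bridges T in
  exists d : {set V} -> V * seq V * {set {set V}},
    (forall x : V, let: (rt, ord, tr) := d (comp F x) in
        rt \in comp F x /\ dfs (adj F) rt ord tr) /\
    H = [set p : V * V |
          let: (a, b) := p in
          ([set a; b] \in bridges T) ||
          ((a != b) && ([set a; b] \in F) &&
           (let: (_, ord, tr) := d (comp F a) in
              ((pre ord a < pre ord b) && ([set a; b] \in tr)) ||
              ((pre ord b < pre ord a) && ([set a; b] \notin tr))))].

Definition output (Eu T0 : {set {set V}}) (K : nat) (H : {set V * V}) : Prop :=
  exists T, greedy_iter Eu K T0 T /\ step3 T H.

End Graphs.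

(* Main.v *)
Require Import Defs.
From mathcomp Require Import all_boot.
From Stdlib Require Import FunctionalExtensionality.
Import Defs.
Set Implicit Arguments. Unset Strict Implicit. Unset Printing Implicit Defensive.

Section Aux.
Variable V : finType.
Implicit Types (E F T : {set {set V}}).

Lemma adj_sym E : symmetric (adj E).
Proof. by move=> x y; rewrite /adj eq_sym setUC. Qed.

Lemma cadj_sym E : connect_sym (adj E).
Proof. exact: sym_connect_sym (adj_sym E). Qed.

Lemma adj_mono E E' : E \subset E' -> subrel (adj E) (adj E').
Proof. by move=> sub x y; rewrite /adj => /andP[-> /(subsetP sub) ->]. Qed.

Lemma cadj_mono E E' x y : E \subset E' -> connect (adj E) x y -> connect (adj E') x y.
Proof. by move=> sub; apply: connect_sub => a b /(adj_mono sub)/connect1. Qed.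

Lemma connect_clos (r : rel V) (P : V -> Prop) x y :
  P x -> (forall a b, P a -> r a b -> P b) -> connect r x y -> P y.
Proof.
move=> Px cl /connectP[p pp ->]; elim: p x Px pp => //= z p IH x Px /andP[rxz pz].
exact: IH (cl _ _ Px rxz) pz.
Qed.

Lemma connect_exit (r : rel V) (A : pred V) x y :
  connect r x y -> A x -> ~~ A y -> exists a b, [/\ A a, ~~ A b & r a b].
Proof.
move=> /connectP[p pp ->]; elim: p x pp => [|z p IH] x /=; first by move=> _ ->.
move=> /andP[rxz pz] Ax nA; case Az: (A z); first exact: IH pz Az nA.
by exists x, z; rewrite Az.
Qed.

Lemma set2_eq (a b u w : V) : [set a; b] = [set u; w] ->
  (a = u /\ b = w) \/ (a = w /\ b = u).
Proof.
move=> e.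
have ha : a \in [set u; w] by rewrite -e !inE eqxx.
have hb : b \in [set u; w] by rewrite -e !inE eqxx orbT.
have hu : u \in [set a; b] by rewrite e !inE eqxx.
have hw : w \in [set a; b] by rewrite e !inE eqxx orbT.
move: ha hb hu hw; rewrite !inE => /orP[]/eqP ea /orP[]/eqP eb /orP[]/eqP eu /orP[]/eqP ew;
  subst; auto.
Qed.

Lemma comp_eq E u w : connect (adj E) u w -> comp E u = comp E w.
Proof.
move=> c; apply/setP => y; rewrite !inE; apply/idP/idP => h.
  by apply: connect_trans h; rewrite cadj_sym.
by apply: connect_trans c h.
Qed.
End Aux.

Section B.
Variable V : finType.
Implicit Types (E F T : {set {set V}}).

Lemma bridge_conn E (u w : V) : u != w -> [set u;w] \in E ->
  connect (adj (E :\ [set u;w])) u w -> [set u;w] \notin bridges E.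
Proof.
move=> nuw eE c.
have eqc z : comp (E :\ [set u; w]) z = comp E z.
  apply/setP => y; rewrite !inE; apply/idP/idP; first by apply: cadj_mono; apply: subD1set.
  apply: connect_sub => a b /andP[nab abE].
  case: (eqVneq [set a;b] [set u;w]) => [eab|neab].
    by case: (set2_eq eab) => [[-> ->]|[-> ->]] //; rewrite cadj_sym.
  by apply: connect1; rewrite /adj nab !inE neab abE.
by rewrite inE /ncomp (eq_imset _ eqc) ltnn andbF.
Qed.

Lemma bridge_nconn E (u w : V) : u != w -> [set u;w] \in E ->
  ~~ connect (adj (E :\ [set u;w])) u w -> [set u;w] \in bridges E.
Proof.
move=> nuw eE nc.
set E' := E :\ [set u; w].
pose f := fun S : {set V} => \bigcup_(z in S) comp E z.
have fc z : f (comp E' z) = comp E z.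
  apply/setP=> y; apply/bigcupP/idP => [[z' z'in yin]|yin]; last by exists z; rewrite // inE connect0.
  rewrite inE in z'in.
  by rewrite (comp_eq (cadj_mono (subD1set _ _) z'in)).
have eqi : f @: [set comp E' x | x : V] = [set comp E x | x : V].
  by rewrite -imset_comp; apply: eq_imset => z /=; rewrite fc.
rewrite inE eE /ncomp -eqi ltn_neqAle leq_imset_card andbT.
apply/imset_injP => inj.
have := inj (comp E' u) (comp E' w) (imset_f _ isT) (imset_f _ isT).
rewrite !fc (comp_eq (connect1 (_ : adj E u w))); last by rewrite /adj nuw eE.
move=> /(_ erefl) h.
have : w \in comp E' w by rewrite inE connect0.
by rewrite -h inE (negbTE nc).
Qed.
End B.

Section C.
Variable V : finType.
Implicit Types (E F T : {set {set V}}).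

Lemma add_edge E0 (u w x y : V) : connect (adj ([set u;w] |: E0)) x y ->
  connect (adj E0) x y \/ (connect (adj E0) x u /\ connect (adj E0) w y) \/
  (connect (adj E0) x w /\ connect (adj E0) u y).
Proof.
apply: (connect_clos (P := fun z => connect (adj E0) x z \/
  (connect (adj E0) x u /\ connect (adj E0) w z) \/
  (connect (adj E0) x w /\ connect (adj E0) u z))); first by left; exact: connect0.
move=> a b Pa /andP[nab]; rewrite !inE => /orP[/eqP eab | abE]; last first.
  have st z : connect (adj E0) z a -> connect (adj E0) z b.
    by move=> h; apply: connect_trans h (connect1 _); rewrite /adj nab abE.
  by case: Pa => [/st|[[h1 /st]|[h1 /st]]]; auto.
have c0 := connect0 (adj E0).
case: (set2_eq eab) => [[-> ->]|[-> ->]] in Pa *.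
  by case: Pa => [h|[[h1 h2]|[h1 h2]]]; auto.
by case: Pa => [h|[[h1 h2]|[h1 h2]]]; auto.
Qed.

Lemma cyc_keep E (x y u w : V) : x != y -> [set x;y] \in E -> [set u;w] != [set x;y] ->
  connect (adj (E :\ [set x;y])) x y -> ~~ connect (adj (E :\ [set u;w])) u w ->
  connect (adj (E :\ [set u;w] :\ [set x;y])) x y.
Proof.
move=> nxy gE hg c nc.
case hE: ([set u;w] \in E); last first.
  have -> : E :\ [set u;w] = E.
    by apply/setP=> z; rewrite !inE; case: eqP => // ->; rewrite hE.
  exact: c.
have e1 : E :\ [set x;y] = [set u;w] |: (E :\ [set u;w] :\ [set x;y]).
  apply/setP=> z; rewrite !inE; case: (eqVneq z [set u;w]) => [->|] //=.
  by rewrite hg hE.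
rewrite e1 in c.
have mono := cadj_mono (subD1set (E :\ [set u;w]) [set x;y]).
have axy : adj (E :\ [set u;w]) x y by rewrite /adj nxy !inE eq_sym hg gE.
case: (add_edge c) => [//|[[c1 c2]|[c1 c2]]]; exfalso; move/negP: nc; apply.
  rewrite cadj_sym in c1; rewrite cadj_sym in c2.
  apply: (connect_trans (mono _ _ c1)).
  apply: (connect_trans (connect1 axy)).
  exact: mono.
apply: (connect_trans (mono _ _ c2)).
apply: (connect_trans (connect1 (_ : adj _ y x))); first by rewrite adj_sym.
exact: mono.
Qed.
End C.

Section D.
Variable V : finType.
Implicit Types (E F T : {set {set V}}).

Lemma F_cyc T : (forall e, e \in T -> #|e| = 2) -> forall a b : V, a != b ->
  [set a;b] \in T :\: bridges T ->
  connect (adj ((T :\: bridges T) :\ [set a;b])) a b.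
Proof.
move=> s2 a b nab; rewrite inE => /andP[nB gT].
have c0 : connect (adj (T :\ [set a;b])) a b.
  case c: (connect _ a b) => //; move: nB; rewrite bridge_nconn ?c //.
suff H : forall s, all (mem (bridges T)) s ->
    connect (adj ((T :\: [set x in s]) :\ [set a;b])) a b.
  have := H (enum (bridges T)); rewrite set_enum; apply.
  by apply/allP => x; rewrite mem_enum.
elim=> [|h s IH] /=.
  by move=> _; have -> : T :\: [set x in [::]] = T by apply/setP=>z; rewrite !inE /= ?andbT.
move=> /andP[hB sB].
have hT : h \in T by move: hB; rewrite inE => /andP[].
have /cards2P [u [w [nuw eh]]] : #|h| == 2 by rewrite s2.
have -> : T :\: [set x in h :: s] = (T :\: [set x in s]) :\ h.
  by apply/setP => z; rewrite !inE negb_or; case: (z == h); case: (z \in s); case: (z \in T).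
subst h; apply: cyc_keep => //.
- rewrite !inE gT andbT; apply/negP => gs; have := allP sB _ gs.
  by rewrite /= (negbTE nB).
- by apply/eqP => hg; rewrite hg (negbTE nB) in hB.
- exact: IH.
- apply/negP => c.
  have c' : connect (adj (T :\ [set u; w])) u w.
    by apply: cadj_mono c; apply: setSD; apply: subsetDl.
  by rewrite (negbTE (bridge_conn nuw hT c')) in hB.
Qed.
End D.

Section DFS.
Variable V : finType.
Variable F : {set {set V}}.
Variable rt : V.
Hypothesis hF : forall a b : V, a != b -> [set a;b] \in F -> connect (adj (F :\ [set a;b])) a b.

Definition ocur (vis : seq V) (tr : {set {set V}}) : rel V := fun a b =>
  adj F a b && (a \in vis) && (b \in vis) &&
  (((index a vis < index b vis) && ([set a;b] \in tr)) ||
   ((index b vis < index a vis) && ([set a;b] \notin tr))).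

Definition Inv (st vis : seq V) (tr : {set {set V}}) : Prop :=
 [/\ [/\ uniq vis, rt \in vis, index rt vis = 0, {subset st <= vis} & last rt st = rt],
     [/\ pairwise (fun a b => index b vis < index a vis) st,
         sorted (fun a b => [set b; a] \in tr) st,
         (forall a b, [set a;b] \in tr -> a \in vis) &
         tr \subset F],
     (forall a a' b, [set a;b] \in tr -> [set a';b] \in tr -> index a vis < index b vis ->
        index a' vis < index b vis -> a = a'),
     (forall a b v, [set a;b] \in tr -> index a vis < index b vis -> v \in st ->
        index v vis < index b vis -> index v vis <= index a vis) &
     [/\ (forall v z, v \in st -> z \in vis -> index v vis <= index z vis ->
            connect (ocur vis tr) v z),
         (forall z, z \in vis -> connect (ocur vis tr) rt z),
         (forall z y, z \in vis -> z \notin st -> adj F z y -> y \in vis) &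
         (forall z, z \in vis -> z \notin st -> z != rt ->
            exists2 b, index b vis < index z vis & connect (ocur vis tr) z b)]].

Lemma idxR (vis : seq V) w x : x \in vis -> index x (rcons vis w) = index x vis.
Proof. by move=> xv; rewrite -cats1 index_cat xv. Qed.

Lemma idxW (vis : seq V) w : w \notin vis -> index w (rcons vis w) = size vis.
Proof. by move=> wv; rewrite -cats1 index_cat (negbTE wv) /= eqxx addn0. Qed.

Lemma ocur_mono vis tr v w a b : w \notin vis -> ocur vis tr a b ->
  ocur (rcons vis w) ([set v;w] |: tr) a b.
Proof.
move=> wn /andP[/andP[/andP[ab av] bv] o].
have neq : [set a;b] != [set v;w].
  apply/eqP => e; case: (set2_eq e) => [[_ eb]|[ea _]]; subst.
    by rewrite bv in wn.
  by rewrite av in wn.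
rewrite /ocur ab !mem_rcons !in_cons av bv !orbT !idxR // !inE (negbTE neq) /=.
exact: o.
Qed.

Lemma push_pres v st vis tr w : Inv (v :: st) vis tr -> adj F v w -> w \notin vis ->
  Inv (w :: v :: st) (rcons vis w) ([set v;w] |: tr).
Proof.
move=> [[uv rtv rt0 sv lst] [pw srt t5 tF] t6 t7 [t8 t9 t10 t11]] avw wn.
have vv : v \in vis := sv v (mem_head _ _).
have iR x : x \in vis -> index x (rcons vis w) = index x vis by apply: idxR.
have iw : index w (rcons vis w) = size vis by apply: idxW.
have ltw x : x \in vis -> index x vis < size vis by rewrite index_mem.
have mem' x : (x \in (rcons vis w)) = (x == w) || (x \in vis) by rewrite mem_rcons in_cons.
have nvw : v != w by apply/eqP => e; rewrite -e vv in wn.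
have cmono x y : connect (ocur vis tr) x y -> connect (ocur (rcons vis w) ([set v;w] |: tr)) x y.
  by apply: connect_sub => a b h; apply: connect1; apply: ocur_mono.
have onew : ocur (rcons vis w) ([set v;w] |: tr) v w.
  by rewrite /ocur avw !mem' eqxx vv orbT iR // iw ltw // !inE eqxx /=.
have top u : u \in v :: st -> index u vis <= index v vis.
  rewrite in_cons => /orP[/eqP -> //|us].
  by move: pw; rewrite pairwise_cons => /andP[/allP/(_ u us) /ltnW].
have tcase x y : [set x;y] \in ([set v;w] |: tr) -> index x (rcons vis w) < index y (rcons vis w) ->
   (x = v /\ y = w) \/ [/\ [set x;y] \in tr, x \in vis, y \in vis & index x vis < index y vis].
  rewrite !inE => /orP[/eqP e|xy].
    case: (set2_eq e) => [[-> ->]|[-> ->]]; first by left.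
    by rewrite iw iR // ltnNge ltnW ?ltw.
  have xv := t5 _ _ xy.
  have yv : y \in vis by apply: (t5 y x); rewrite setUC.
  by rewrite !iR // => lt; right.
split.
- split.
  + by rewrite rcons_uniq wn uv.
  + by rewrite mem' rtv orbT.
  + by rewrite iR.
  + by move=> u; rewrite in_cons mem' => /orP[->//|/sv ->]; rewrite orbT.
  + exact: lst.
- split.
  + rewrite pairwise_cons; apply/andP; split.
      apply/allP => u /sv uv'; by rewrite iw iR // ltw.
    rewrite (@eq_in_pairwise _ (mem vis) _ (fun a b => index b vis < index a vis)) //.
      by move=> a b av bv; rewrite /= !iR.
    by apply/allP.
  + rewrite /= !inE setUC eqxx /=; apply: sub_path srt => a b h; by rewrite inE h orbT.
  + move=> a b; rewrite !inE => /orP[/eqP e|/t5 av]; last by rewrite mem' av orbT.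
    by case: (set2_eq e) => [[-> _]|[-> _]]; rewrite mem' ?eqxx ?vv ?orbT.
  + by rewrite subUset sub1set tF andbT; case/andP: avw.
- move=> a a' b h1 h2 l1 l2.
  case: (tcase _ _ h1 l1) => [[ea eb]|[e1 av bv l1']];
  case: (tcase _ _ h2 l2) => [[ea' eb']|[e2 a'v bv' l2']]; subst => //.
  + by rewrite bv' in wn.
  + by rewrite bv in wn.
  + by apply: (t6 a a' b).
- move=> a b v' h l; rewrite in_cons => /orP[/eqP ->|v'in].
    case: (tcase _ _ h l) => [[_ ->]|[_ _ bv _]]; first by rewrite ltnn.
    by rewrite iw iR // ltnNge ltnW ?ltw.
  have v'v := sv _ v'in.
  case: (tcase _ _ h l) => [[-> ->]|[e av bv l']].
    by rewrite (iR v') // (iR v) //; move=> _; apply: top.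
  by rewrite !iR //; apply: t7.
- split.
  + move=> v' z; rewrite in_cons => /orP[/eqP ->|v'in].
      rewrite mem' => /orP[/eqP -> _|zv]; first exact: connect0.
      by rewrite iw iR // leqNgt ltw.
    have v'v := sv _ v'in.
    rewrite mem' => /orP[/eqP -> _|zv].
      apply: connect_trans (connect1 onew); apply: cmono; apply: t8 => //; exact: top.
    by rewrite !iR // => l; apply: cmono; apply: t8.
  + move=> z; rewrite mem' => /orP[/eqP ->|zv]; last by apply: cmono; apply: t9.
    by apply: connect_trans (connect1 onew); apply: cmono; apply: t9.
  + move=> z y; rewrite mem' in_cons negb_or => /orP[/eqP ->|zv]; first by rewrite eqxx.
    by move=> /andP[_ zn] azy; rewrite mem' (t10 z y) ?orbT.
  + move=> z; rewrite mem' in_cons negb_or => /orP[/eqP ->|zv]; first by rewrite eqxx.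
    move=> /andP[_ zn] nzr; have [b lb cb] := t11 z zv zn nzr.
    have bv : b \in vis by rewrite -index_mem (ltn_trans lb) ?index_mem.
    by exists b; rewrite ?iR //; apply: cmono.
Qed.

Lemma pop_pres v st vis tr : Inv (v :: st) vis tr -> (forall w, adj F v w -> w \in vis) ->
  Inv st vis tr.
Proof.
move=> [[uv rtv rt0 sv lst] [pw srt t5 tF] t6 t7 [t8 t9 t10 t11]] hv.
have sub u : u \in st -> u \in v :: st by rewrite in_cons => ->; rewrite orbT.
have vv : v \in vis := sv v (mem_head _ _).
split.
- split => //.
  + by move=> u /sub /sv.
  + by clear -lst; case: st lst.
- split => //.
  + by move: pw; rewrite pairwise_cons => /andP[].
  + exact: path_sorted srt.
- exact: t6.
- by move=> a b v' h l /sub; apply: t7.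
- split => //.
  + by move=> v' z /sub; apply: t8.
  + move=> z y zv zn; case: (eqVneq z v) => [->|nzv]; first exact: hv.
    by apply: t10; rewrite // in_cons negb_or nzv.
  move=> z zv zn nzr; case: (eqVneq z v) => [ezv|nzv]; last first.
    by apply: t11; rewrite // in_cons negb_or nzv.
  subst z.
  case: st {sv lst pw srt t7 t8 t10 t11 sub zn} (sv) (lst) (pw) (srt) (t7) (t8) (t10)
    => [|p s] sv lst pw srt t7 t8 t10.
    by move: lst nzr => /= ->; rewrite eqxx.
  move: pw; rewrite pairwise_cons => /andP[/allP lts _].
  have lpv : index p vis < index v vis by apply: lts; rewrite mem_head.
  have pv : p \in vis by apply: sv; rewrite !in_cons eqxx orbT.
  have tpv : [set p; v] \in tr by move: srt => /= /andP[].
  have nvp : v != p by apply/eqP => e; rewrite e ltnn in lpv.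
  have vpF : [set v; p] \in F by rewrite setUC; apply: (subsetP tF).
  have c := hF nvp vpF.
  pose A := fun z => (z \in vis) && (index v vis <= index z vis).
  have hA : A v by rewrite /A vv leqnn.
  have hnA : ~~ A p by rewrite /A pv /= -ltnNge lpv.
  have [a' [b' [Aa nAb ab]]] := connect_exit c hA hnA.
  move: Aa; rewrite /A => /andP[a'v la'].
  have abF : adj F a' b' by apply: adj_mono ab; apply: subD1set.
  have neab : [set a'; b'] != [set v; p].
    by move: ab; rewrite /adj !inE => /andP[_ /andP[]].
  have b'v : b' \in vis.
    case: (eqVneq a' v) => [ea|nea]; first by rewrite ea in abF; apply: hv.
    apply: (t10 a') => //; rewrite in_cons negb_or nea /=.
    apply/negP => /lts; rewrite ltnNge la' //.
  have lb : index b' vis < index v vis by move: nAb; rewrite /A b'v /= -ltnNge.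
  have nt : [set a'; b'] \notin tr.
    apply/negP => h; rewrite setUC in h.
    case: (eqVneq a' v) => [ea|nea].
      subst a'.
      have e := t6 b' p v h tpv lb lpv; subst b'.
      by rewrite setUC eqxx in neab.
    have lva : index v vis < index a' vis.
      rewrite ltn_neqAle la' andbT; apply/eqP => e.
      by rewrite (index_inj v a'v vv (esym e)) eqxx in nea.
    have := t7 b' a' v h (leq_ltn_trans (ltnW lb) lva) (mem_head _ _) lva.
    by rewrite leqNgt lb.
  exists b' => //.
  apply: connect_trans (t8 v a' (mem_head _ _) a'v la') (connect1 _).
  by rewrite /ocur abF a'v b'v /= (leq_trans lb la') nt orbT.
Qed.

Lemma run_pres st vis tr vis' tr' : dfs_from (adj F) st vis tr vis' tr' ->
  Inv st vis tr -> Inv [::] vis' tr'.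
Proof.
elim=> {st vis tr vis' tr'} //.
- move=> v w st vis tr vis' tr' avw wn _ IH I; apply: IH; exact: push_pres.
- move=> v st vis tr vis' tr' hv _ IH I; apply: IH; exact: pop_pres I hv.
Qed.

Lemma dfs_main ord tr : dfs (adj F) rt ord tr ->
  [/\ rt \in ord, (forall z y, z \in ord -> adj F z y -> y \in ord) &
      (forall z y, z \in ord -> y \in ord -> connect (ocur ord tr) z y)].
Proof.
move=> D.
have I0 : Inv [:: rt] [:: rt] set0.
  split.
  - by split => //=; rewrite ?mem_seq1 ?eqxx.
  - by split => //=; [move=> a b; rewrite inE | apply: sub0set].
  - by move=> a a' b; rewrite inE.
  - by move=> a b v; rewrite inE.
  - split.
    + by move=> v z; rewrite !mem_seq1 => /eqP -> /eqP -> _; apply: connect0.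
    + by move=> z; rewrite mem_seq1 => /eqP ->; apply: connect0.
    + by move=> z y ->.
    + by move=> z ->.
have [[uv rtv rt0 _ _] _ _ _ [_ t9 t10 t11]] := run_pres D I0.
have cl : forall z y, z \in ord -> adj F z y -> y \in ord by move=> z y zv; apply: t10.
have back : forall n z, index z ord < n -> z \in ord -> connect (ocur ord tr) z rt.
  elim=> [|n IH] z //; move=> lz zv.
  case: (eqVneq z rt) => [->|nzr]; first exact: connect0.
  have [b lb cb] := t11 z zv isT nzr.
  have bv : b \in ord by rewrite -index_mem (ltn_trans lb) ?index_mem.
  apply: connect_trans cb (IH b _ bv).
  exact: leq_trans lb _.
split => // z y zv yv.
by apply: connect_trans (back _ z (ltnSn _) zv) (t9 y yv).
Qed.
End DFS.


Lemma greedy_sub (V : finType) (Eu : {set {set V}}) n T T' : greedy_iter Eu n T T' ->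
  T \subset T' /\ (T \subset Eu -> T' \subset Eu).
Proof.
elim=> {n T T'} [T|n T T' T'' [u [v [uvin eq _]]] _ [IH1 IH2]]; first by split.
move: uvin; rewrite inE => /andP[_ uvE].
split; first by apply: subset_trans IH1; rewrite eq subsetUr.
by move=> TE; apply: IH2; rewrite eq subUset sub1set uvE TE.
Qed.

Lemma tree_bridges (V : finType) (T0 : {set {set V}}) : (forall e, e \in T0 -> #|e| = 2) ->
  acyclic T0 -> bridges T0 = T0.
Proof.
move=> s2 ac; apply/setP => e; apply/idP/idP; first by rewrite inE => /andP[].
move=> eT; have /cards2P [u [w [nuw ee]]] : #|e| == 2 by rewrite s2.
subst e; apply: bridge_nconn => //; apply/negP => /connectP [p pp].
case: (shortenP pp) => p' pp' up' _ lw.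
have cyc : cycle (adj T0) (u :: p').
  rewrite /= rcons_path -lw (sub_path (adj_mono (subD1set T0 [set u; w])) pp') /=.
  by rewrite /adj eq_sym nuw setUC eT.
have sz : 3 <= size (u :: p').
  case: p' pp' up' lw {cyc} => [|x [|y q]] //=.
    by move=> _ _ e; rewrite e eqxx in nuw.
  by rewrite andbT /adj !inE => /andP[_ /andP[]] ne _ _ e; rewrite e eqxx in ne.
by move: (ac _ up' sz); rewrite cyc.
Qed.

Unset Implicit Arguments.
Theorem theorem2 (V : finType) (Eu T0 : {set {set V}}) (H : nat -> {set V * V}) :
  2 <= #|V| ->
  simple_graph Eu ->
  ugraph_connected Eu ->
  spanning_tree Eu T0 ->
  (forall K, K <= #|Eu :\: T0| -> output Eu T0 K (H K)) ->
  (forall K, K <= #|Eu :\: T0| -> strongly_connected (H K)) /\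
  \big[minn/Phi (H 0)]_(K < #|Eu :\: T0|.+1) Phi (H K)
    <= 2 * max_outdeg (adj T0) * diam (adj T0) ^ 2
         * (1 + max_outdeg (adj T0)) ^ (4 * diam (adj T0)).
Proof.
move=> n2 simple conn [T0sub [T0conn T0acyc]] hout.
have s2T0 : forall e, e \in T0 -> #|e| = 2.
  by move=> e /(subsetP T0sub); apply: simple.
split.
- move=> K hK; have [T [gi st3]] := hout K hK.
  have [T0T TEu] := greedy_sub gi; have TEu' := TEu T0sub.
  have s2T : forall e, e \in T -> #|e| = 2.
    by move=> e /(subsetP TEu'); apply: simple.
  move: st3 => [d [hd HK]].
  have hF := F_cyc s2T.
  move=> x y; apply: (connect_sub _ (cadj_mono T0T (T0conn x y))).
  move=> a b /andP[nab abT].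
  case hb: ([set a;b] \in bridges T).
    by apply: connect1; rewrite /arcs HK inE /= hb.
  have abF : [set a;b] \in T :\: bridges T by rewrite inE hb abT.
  case Ed: (d (comp (T :\: bridges T) a)) => [[rt ord] tr].
  have := hd a; rewrite Ed => -[rtin D].
  have [rto clo co] := dfs_main hF D.
  have inord z : connect (adj (T :\: bridges T)) rt z -> z \in ord.
    by apply: (connect_clos (P := fun z => z \in ord)) => // c e ce; apply: clo.
  have art : connect (adj (T :\: bridges T)) a rt by move: rtin; rewrite inE.
  have ao : a \in ord by apply: inord; rewrite cadj_sym.
  have bo : b \in ord by apply: clo ao _; rewrite /adj nab abF.
  apply: connect_sub _ (co a b ao bo) => a' b' oab; apply: connect1.
  have ra' : connect (adj (T :\: bridges T)) rt a'.
    apply: connect_sub _ (co rt a' rto _) => [c e /andP[/andP[/andP[h _] _] _]|].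
      exact: connect1.
    by case/andP: oab => /andP[/andP[]].
  have ec : comp (T :\: bridges T) a' = comp (T :\: bridges T) a.
    by rewrite -(comp_eq ra') (comp_eq art).
  move: oab; rewrite /ocur => /andP[/andP[/andP[aab _] _] o].
  move: aab; rewrite /adj => /andP[nab' abF'].
  rewrite /arcs HK inE /= ec Ed nab' abF' /= /pre !ltnS o orbT.
  done.
- have bT0 := tree_bridges s2T0 T0acyc.
  have [T [gi st3]] := hout 0 (leq0n _).
  have eT : T = T0 by inversion gi.
  subst T.
  move: st3 => [d [_ HK]].
  have arcsE : arcs (H 0) = adj T0.
    apply: functional_extensionality => a; apply: functional_extensionality => b.
    rewrite /arcs HK inE /= bT0 setDv inE andbF /= /adj.
    rewrite orbF; case: (eqVneq a b) => [<-|] //=.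
    rewrite setUid; apply/negP => h; have := s2T0 _ h; by rewrite cards1.
  have indeg : max_indeg (adj T0) = max_outdeg (adj T0).
    rewrite /max_indeg /max_outdeg; apply: eq_bigr => x _.
    by apply: eq_card => y; rewrite !inE adj_sym.
  rewrite big_ord_recl /=.
  apply: leq_trans (geq_minl _ _) _.
  by rewrite /Phi arcsE indeg addnn -mul2n.
Qed.
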